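(* Let $m \in \mathbb{N}$ and let $G$ be a subdivision of the star $K_{1,m}$ (i.e., a graph obtained from $K_{1,m}$ by replacing its edges with internally disjoint paths of arbitrary positive lengths). If $m=1$, then the total graph $T(G)$ is equitably $k$-choosable for every $k \geq 3$. If $m \geq 2$, then $T(G)$ is equitably $k$-choosable for every $k \geq m+1$.
   Context: All graphs are finite and simple. The total graph $T(G)$ of a graph $G$ has vertex set $V(G)\cup E(G)$, two elements being adjacent in $T(G)$ iff they are adjacent or incident in $G$. A $k$-assignment $L$ for a graph $G$ assigns to each vertex $v$ a set $L(v)$ of exactly $k$ colors. An equitable $L$-coloring of $G$ is a proper coloring $f$ of $G$ with $f(v)\in L(v)$ for all $v$, such that no color is used on more than $\lceil |V(G)|/k\rceil$ vertices. $G$ is equitably $k$-choosable if it has an equitable $L$-coloring for every $k$-assignment $L$. *)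

(* Defs.v *)
From mathcomp Require Import all_boot.
Set Implicit Arguments. Unset Strict Implicit. Unset Printing Implicit Defensive.

Definition simple_graph (V : finType) (e : rel V) : Prop :=
  symmetric e /\ irreflexive e.

Definition is_edge (V : finType) (e : rel V) (A : {set V}) : bool :=
  [exists x, exists y, e x y && (A == [set x; y])].

Definition edge_t (V : finType) (e : rel V) : finType :=
  {A : {set V} | is_edge e A}.

Definition total_vertex (V : finType) (e : rel V) : finType :=
  (V + edge_t e)%type.

Definition total_adj (V : finType) (e : rel V) : rel (total_vertex e) :=
  fun a b =>
    match a, b with
    | inl u, inl v => e u v
    | inl u, inr f => u \in val f
    | inr f, inl u => u \in val f
    | inr f, inr g => (f != g) && ~~ [disjoint val f & val g]
    end.

Definition k_assignment (W : finType) (k : nat) (L : W -> seq nat) : Prop :=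
  forall w, uniq (L w) /\ size (L w) = k.

Definition equitable_L_coloring (W : finType) (r : rel W) (k : nat)
    (L : W -> seq nat) (f : W -> nat) : Prop :=
  (forall w, f w \in L w) /\
  (forall u v, r u v -> f u != f v) /\
  (forall c : nat, #|[set w | f w == c]| <= (#|W| + k.-1) %/ k).
  (* (#|W| + k - 1) / k = ceil(#|W| / k) for k >= 1 *)

Definition equitably_k_choosable (W : finType) (r : rel W) (k : nat) : Prop :=
  forall L : W -> seq nat, k_assignment k L ->
    exists f : W -> nat, equitable_L_coloring r k L f.

(* Arm i (i < m) is replaced by a path of length l i >= 1.  Vertices: the
   centre (None) and, for each arm i, internal/end vertices Some (i, j) with
   j < l i, lying at distance j+1 from the centre along arm i. *)
Definition star_sub_vertex (m : nat) (l : 'I_m -> nat) : finType :=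
  option {i : 'I_m & 'I_(l i)}.

Definition star_sub_adj (m : nat) (l : 'I_m -> nat) : rel (star_sub_vertex l) :=
  fun a b =>
    match a, b with
    | None, None => false
    | None, Some y => val (tagged y) == 0
    | Some x, None => val (tagged x) == 0
    | Some x, Some y =>
        (tag x == tag y) &&
        (((val (tagged x)).+1 == val (tagged y)) ||
         ((val (tagged y)).+1 == val (tagged x)))
    end.

(* Main.v *)
Require Import Defs.
From mathcomp Require Import all_boot.
From mathcomp Require Import zify.

Set Implicit Arguments. Unset Strict Implicit. Unset Printing Implicit Defensive.


Section Generic.
Variables (W : finType) (r : rel W) (k : nat).

Definition nb (R : {set W}) (x : W) := #|[set y in R | r x y || r y x]|.

Inductive good : {set W} -> Prop :=
| gsmall (X : {set W}) : #|X| <= k -> good X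
| gstep (X R : {set W}) : R \subset X -> #|X| = #|R| + k ->
    (forall t, 0 < t -> #|[set x in X :\: R | t <= nb R x]| <= k - t) ->
    good R -> good X.

Hypothesis rirr : forall x, ~~ r x x.
Hypothesis k0 : 0 < k.
Variable L : W -> seq nat.
Hypothesis HL : k_assignment k L.

Lemma pick_color (s F : seq nat) : uniq s -> size F < size s ->
  exists2 c, c \in s & c \notin F.
Proof.
move=> us lt; case: (boolP (has (fun c => c \notin F) s)) => [/hasP [c cs cF]|/hasPn H].
  by exists c.
have := uniq_leq_size us (fun c cs => negbNE (H c cs)).
by rewrite leqNgt lt.
Qed.

Lemma greedy (R S : {set W}) (g0 : W -> nat) :
  (forall x, x \in R -> x \notin S) -> #|S| <= k ->
  (forall t, 0 < t -> #|[set x in S | t <= nb R x]| <= k - t) ->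
  (forall w, w \in R -> g0 w \in L w) ->
  (forall u v, u \in R -> v \in R -> r u v -> g0 u != g0 v) ->
  exists f : W -> nat,
   [/\ forall y, y \notin S -> f y = g0 y,
       forall w, w \in R :|: S -> f w \in L w,
       forall u v, u \in R :|: S -> v \in R :|: S -> r u v -> f u != f v &
       forall x y, x \in S -> y \in S -> f x = f y -> x = y].
Proof.
move=> dRS cS tc gL gP.
suff H : forall n (T : {set W}) (g : W -> nat), #|T| = n -> T \subset S ->
  (forall y, y \notin S -> g y = g0 y) ->
  (forall w, w \in R :|: (S :\: T) -> g w \in L w) ->
  (forall u v, u \in R :|: (S :\: T) -> v \in R :|: (S :\: T) -> r u v -> g u != g v) ->
  (forall x y, x \in S :\: T -> y \in S :\: T -> g x = g y -> x = y) ->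
  (forall y z, y \in S :\: T -> z \in T -> nb R z <= nb R y) ->
  exists f : W -> nat,
   [/\ forall y, y \notin S -> f y = g0 y,
       forall w, w \in R :|: S -> f w \in L w,
       forall u v, u \in R :|: S -> v \in R :|: S -> r u v -> f u != f v &
       forall x y, x \in S -> y \in S -> f x = f y -> x = y].
  apply: (H #|S| S g0) => //.
  - by move=> w; rewrite setDv setU0; apply: gL.
  - by move=> u v; rewrite setDv setU0; apply: gP.
  - by move=> x y; rewrite setDv inE.
  - by move=> y z; rewrite setDv inE.
elim=> [|n IH] T g cT sTS gE gL' gP' gI gO.
  move/cards0_eq: cT => T0; rewrite T0 setD0 in gL' gP' gI.
  by exists g.
have [x0 x0T] : exists x, x \in T by apply/card_gt0P; rewrite cT.
case: (@arg_maxnP _ x0 (mem T) (nb R) x0T) => x xT xmax.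
have {}xT : x \in T by [].
have {}xmax : forall z, z \in T -> nb R z <= nb R x by move=> z zT; apply: xmax.
have xS : x \in S by apply: (subsetP sTS).
have xR : x \notin R by apply/negP => /dRS; rewrite xS.
pose NR := [set y in R | r x y || r y x].
pose F := [seq g y | y <- enum (NR :|: (S :\: T))].
have szF : size F < k.
  rewrite size_map -cardE.
  have h1 : #|NR :|: (S :\: T)| <= #|NR| + #|S :\: T| by rewrite cardsU; lia.
  suff : nb R x + #|S :\: T| < k by rewrite /nb -/NR; lia.
  case: (posnP (nb R x)) => [->|tpos].
    have : #|S :\: T| < #|S|.
      rewrite (cardsD1 x S) xS add1n ltnS; apply: subset_leq_card.
      apply/subsetP => y; rewrite !inE => /andP [yT yS]; rewrite yS andbT.
      by apply/eqP => yx; rewrite yx xT in yT.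
    lia.
  have h2 : #|x |: (S :\: T)| <= k - nb R x.
    apply: leq_trans (tc _ tpos); apply: subset_leq_card; apply/subsetP => y.
    rewrite !inE => /orP [/eqP ->|/andP [yT yS]]; first by rewrite xS leqnn.
    by rewrite yS /=; apply: gO => //; rewrite inE yT yS.
  move: h2; rewrite cardsU1 inE xT /=; lia.
have [c cL cF] : exists2 c, c \in L x & c \notin F.
  by apply: pick_color; case: (HL x) => // _ ->.
pose g' := fun y => if y == x then c else g y.
have gF y : y \in NR :|: (S :\: T) -> g y \in F by move=> yin; apply: map_f; rewrite mem_enum.
apply: (IH (T :\ x) g').
- by move: cT; rewrite (cardsD1 x T) xT add1n => -[].
- by apply: subset_trans sTS; apply: subsetDl.
- move=> y yS; rewrite /g'; case: (y =P x) => [yx|_]; last exact: gE.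
  by move: yS; rewrite yx xS.
- move=> w; rewrite /g'; case: (w =P x) => [->//|/eqP wx win].
  by apply: gL'; move: win; rewrite !inE wx.
- move=> u v; rewrite /g'.
  have memx y : y != x -> y \in R :|: (S :\: (T :\ x)) -> y \in R :|: (S :\: T).
    by move=> yx; rewrite !inE yx.
  case: (u =P x) => [->|/eqP ux]; case: (v =P x) => [->|/eqP vx].
  + by move=> _ _; rewrite (negbTE (rirr x)).
  + move=> _ vin rxv; apply/eqP => cv; move: cF; rewrite cv gF //.
    move: (memx v vx vin); rewrite !inE rxv /= => /orP [->//|->]; by rewrite orbT.
  + move=> uin _ rux; apply/eqP => cu; move: cF; rewrite -cu gF //.
    move: (memx u ux uin); rewrite !inE rux orbT /= => /orP [->//|->]; by rewrite orbT.
  + by move=> uin vin; apply: gP'; apply: memx.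
- move=> y z yin zin; rewrite /g'.
  have memS w : w \in S :\: (T :\ x) -> w != x -> w \in S :\: T.
    by rewrite !inE => /andP [h1 h2] wx; rewrite h2 andbT; move: h1; rewrite wx.
  case: (y =P x) => [->|/eqP yx]; case: (z =P x) => [->//|/eqP zx].
  + move=> e; move: cF; rewrite e gF //; by rewrite inE (memS z zin zx) orbT.
  + move=> e; move: cF; rewrite -e gF //; by rewrite inE (memS y yin yx) orbT.
  + by apply: gI; apply: memS.
- move=> y z; rewrite !inE; case: (y =P x) => [->|/eqP yx] /=.
    by move=> _ /andP [_ zT]; apply: xmax.
  by move=> /andP [yT yS] /andP [_ zT]; apply: gO => //; rewrite inE yT yS.
Qed.

Definition eqcol (X : {set W}) (f : W -> nat) :=
 [/\ forall w, w \in X -> f w \in L w,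
     forall u v, u \in X -> v \in X -> r u v -> f u != f v &
     forall c, #|[set w in X | f w == c]| <= (#|X| + k.-1) %/ k].

Lemma good_eqcol X : good X -> exists f, eqcol X f.
Proof.
elim=> {X} [X cX | X R sRX cX tc _ [g [gL gP gC]]].
  have nb0 x : nb set0 x = 0.
    by rewrite /nb; apply/eqP; rewrite cards_eq0; apply/eqP/setP => y; rewrite !inE.
  have [|||||f [_ fL fP fI]] := @greedy set0 X (fun _ => 0).
  - by move=> x; rewrite inE.
  - exact: cX.
  - move=> t tp; rewrite (_ : [set x in X | t <= nb set0 x] = set0) ?cards0 //.
    by apply/setP => x; rewrite !inE nb0 leqNgt tp andbF.
  - by move=> w; rewrite inE.
  - by move=> u v; rewrite inE.
  exists f; split.
  - by move=> w wX; apply: fL; rewrite set0U.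
  - by move=> u v uX vX; apply: fP; rewrite set0U.
  move=> c; case: (set_0Vmem [set w in X | f w == c]) => [->|[w]]; first by rewrite cards0.
  rewrite inE => /andP [wX /eqP fw].
  have -> : [set w in X | f w == c] = [set w].
    apply/setP => y; rewrite !inE; apply/andP/eqP => [[yX /eqP fy]|->]; last by rewrite wX fw eqxx.
    by apply: fI; rewrite ?set0U // fy fw.
  rewrite cards1; apply: leq_trans (_ : k %/ k <= _); first by rewrite divnn k0.
  apply: leq_div2r.
  have : 0 < #|X| by apply/card_gt0P; exists w.
  lia.
have [|||||f [fE fL fP fI]] := @greedy R (X :\: R) g.
- by move=> x xR; rewrite inE xR.
- rewrite cardsD (setIidPr sRX); lia.
- exact: tc.
- exact: gL.
- exact: gP.
have XU w : w \in X -> w \in R :|: (X :\: R).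
  by move=> wX; rewrite !inE wX; case: (w \in R).
exists f; split.
- by move=> w /XU; apply: fL.
- by move=> u v /XU uX /XU vX; apply: fP.
move=> c.
have sub : [set w in X | f w == c] \subset
           [set w in R | g w == c] :|: [set w in X :\: R | f w == c].
  apply/subsetP => w; rewrite !inE => /andP [wX fw]; case wR: (w \in R) => /=.
    by rewrite -fE ?fw // inE wR.
  by rewrite wX fw.
have c2 : #|[set w in X :\: R | f w == c]| <= 1.
  case: (set_0Vmem [set w in X :\: R | f w == c]) => [->|[w]]; first by rewrite cards0.
  rewrite inE => /andP [wX /eqP fw].
  have -> : [set w in X :\: R | f w == c] = [set w].
    apply/setP => y; rewrite !inE; apply/andP/eqP => [[yX /eqP fy]|->]; last by move: wX; rewrite inE => /andP [-> ->]; rewrite fw eqxx.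
    apply: fI => //; first by rewrite inE.
    by rewrite fy fw.
  by rewrite cards1.
apply: leq_trans (subset_leq_card sub) _.
rewrite cardsU; apply: leq_trans (leq_subr _ _) _.
have e : (#|X| + k.-1) %/ k = (#|R| + k.-1) %/ k + 1.
  by rewrite cX (addnC #|R| k) -addnA divnDl ?dvdnn // divnn k0 addnC.
rewrite e; apply: leq_add => //; exact: gC.
Qed.

End Generic.

Lemma transfer (W W' : finType) (r : rel W) (r' : rel W') (k : nat) (phi : W -> W') :
  0 < k -> (forall x, ~~ r' x x) -> injective phi ->
  (forall a b, r a b -> r' (phi a) (phi b)) ->
  good r' k (phi @: setT) -> equitably_k_choosable r k.
Proof.
move=> k0 irr' phiI phiA G L HL.
pose L' := fun v => if [pick a | phi a == v] is Some a then L a else iota 0 k.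
have L'phi a : L' (phi a) = L a.
  rewrite /L'; case: pickP => [a' /eqP/phiI -> //|/(_ a)]; by rewrite eqxx.
have HL' : k_assignment k L'.
  move=> v; rewrite /L'; case: pickP => [a _|_]; first exact: HL.
  by rewrite iota_uniq size_iota.
have [f [fL fP fC]] := good_eqcol irr' k0 HL' G.
exists (fun w => f (phi w)); split; last split.
- by move=> w; rewrite -L'phi; apply: fL; apply: imset_f.
- by move=> u v ruv; apply: fP; [apply: imset_f | apply: imset_f | apply: phiA].
move=> c.
have e : #|[set w | f (phi w) == c]| = #|phi @: [set w | f (phi w) == c]| by rewrite card_imset.
rewrite e; apply: (@leq_trans #|[set x in phi @: setT | f x == c]|).
  apply: subset_leq_card; apply/subsetP => x /imsetP [w]; rewrite inE => fw ->.
  by rewrite inE imset_f.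
by apply: leq_trans (fC c) _; rewrite card_imset // cardsT.
Qed.


Section Model.
Variables (m N : nat).

Local Notation V := (option ('I_m * 'I_N.+1)%type).

Definition adjM (x y : V) : bool :=
  match x, y with
  | None, None => false
  | None, Some p => p.2 < 2
  | Some p, None => p.2 < 2
  | Some p, Some p' =>
     if p.1 == p'.1 then [|| (p'.2 : nat) == p.2.+1, (p'.2 : nat) == p.2.+2,
                             (p.2 : nat) == p'.2.+1 | (p.2 : nat) == p'.2.+2]
     else ((p.2 : nat) == 0) && ((p'.2 : nat) == 0)
  end.

Lemma adjM_irr x : ~~ adjM x x.
Proof. case: x => [[i q]|] //=; rewrite eqxx /=; apply/negP; lia. Qed.

Definition XP (P : 'I_m -> nat) : {set V} :=
  [set x : V | if x is Some p then p.2 < P p.1 else true].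

Definition E : {set V} := [set x : V | if x is Some p then (p.2 : nat) == 0 else false].

Lemma cardE_le : #|E| <= m.
Proof.
apply: leq_trans (_ : #|[set Some (i, ord0) | i in [set: 'I_m]]| <= _).
  apply: subset_leq_card; apply/subsetP => -[[i q]|]; rewrite !inE //= => /eqP q0.
  apply/imsetP; exists i; rewrite ?inE //; do 2 f_equal; exact: val_inj.
by apply: leq_trans (leq_imset_card _ _) _; rewrite cardsT card_ord.
Qed.

Lemma card_ltord n a : a <= n -> #|[set q : 'I_n | q < a]| = a.
Proof.
move=> an.
have -> : [set q : 'I_n | q < a] = [set widen_ord an j | j in 'I_a].
  apply/setP => q; rewrite !inE; apply/idP/imsetP => [qa|[j _ ->]] //=.
  by exists (Ordinal qa) => //; apply: val_inj.
rewrite card_imset ?card_ord //.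
by move=> x y /(congr1 val) /= /val_inj.
Qed.

Lemma card_XP P : (forall i, P i <= N.+1) -> #|XP P| = (\sum_i P i).+1.
Proof.
move=> hP.
pose Y := [set p : 'I_m * 'I_N.+1 | p.2 < P p.1].
have -> : XP P = None |: [set Some p | p in Y].
  apply/setP => -[p|]; rewrite !inE //=.
  apply/idP/imsetP => [h|[p' + [->]]]; last by rewrite inE.
  by exists p => //; rewrite inE.
rewrite cardsU1 card_imset; last by move=> x y [].
have -> : (None \notin [set Some p | p in Y]) = true.
  by apply/negP => /imsetP [].
rewrite add1n; congr _.+1.
rewrite -sum1_card (eq_bigl (fun p : 'I_m * 'I_N.+1 => true && (p.2 < P p.1))); last first.
  by move=> p; rewrite inE.
rewrite -(pair_big_dep xpredT (fun i (q : 'I_N.+1) => q < P i) (fun _ _ => 1)) /=.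
apply: eq_bigr => i _.
rewrite sum1_card; transitivity #|[set q : 'I_N.+1 | q < P i]|; last exact: card_ltord.
by apply: eq_card => q; rewrite inE.
Qed.

Lemma exists_sub (P : 'I_m -> nat) t : t <= \sum_i P i ->
  exists P' : 'I_m -> nat, (forall i, P' i <= P i) /\ \sum_i P' i + t = \sum_i P i.
Proof.
elim: t => [|t IH] h; first by exists P; split => //; rewrite addn0.
have [P1 [h1 h2]] := IH (ltnW h).
case: (pickP (fun i => 0 < P1 i)) => [i Hi | H]; last first.
  have : \sum_i P1 i = 0 by rewrite big1 // => i _; move: (H i); case: (P1 i).
  lia.
exists (fun j => if j == i then (P1 j).-1 else P1 j); split.
  by move=> j; case: (j == i); [apply: leq_trans (leq_pred _) (h1 j)|apply: h1].
rewrite -h2 (bigD1 i) //= [in RHS](bigD1 i) //= eqxx.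
rewrite (eq_bigr (fun j => P1 j)); last by move=> j /negbTE ->.
lia.
Qed.

Lemma nbr_cases (P' : 'I_m -> nat) i (q : 'I_N.+1) y : P' i <= q -> y \in XP P' ->
  adjM (Some (i,q)) y || adjM y (Some (i,q)) ->
  [\/ y = None /\ q < 2,
      exists q' : 'I_N.+1, [/\ y = Some (i,q'), q' < P' i & (q'.+1 == q) || (q'.+2 == q)] |
      (q : nat) = 0 /\ exists j (q' : 'I_N.+1), [/\ y = Some (j, q'), (q' : nat) = 0 & j != i]].
Proof.
move=> hq; case: y => [[j q']|]; rewrite inE /=; last by rewrite orbb => h; constructor 1.
move=> hq'; case: (eqVneq i j) => [ij|ij].
  subst j; move=> h; constructor 2; exists q'; split => //.
  move: h; rewrite -!orbA; lia.
move=> h; have [q0 q'0] : (q : nat) = 0 /\ (q' : nat) = 0.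
  by case/orP: h => /andP [/eqP -> /eqP ->].
constructor 3; split => //; exists j, q'; split => //; by rewrite eq_sym.
Qed.


Lemma card_le2 (T : finType) (A : {set T}) (p : pred T) :
  {in A &, forall y z, p y -> p z -> y = z} ->
  {in A &, forall y z, ~~ p y -> ~~ p z -> y = z} -> #|A| <= 2.
Proof.
move=> h1 h2.
have -> : A = [set y in A | p y] :|: [set y in A | ~~ p y].
  by apply/setP => y; rewrite !inE; case: (y \in A); case: (p y).
rewrite cardsU; apply: leq_trans (leq_subr _ _) _.
have c1 : #|[set y in A | p y]| <= 1.
  by apply/card_le1_eqP => y z; rewrite !inE => /andP [yA py] /andP [zA pz]; apply: h1.
have c2 : #|[set y in A | ~~ p y]| <= 1.
  by apply/card_le1_eqP => y z; rewrite !inE => /andP [yA py] /andP [zA pz]; apply: h2.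
lia.
Qed.

Section Bounds.
Variables (P' : 'I_m -> nat) (R : {set V}).
Hypothesis sR : R \subset XP P'.

Lemma nb_far i (q : 'I_N.+1) : P' i + 2 <= q -> nb adjM R (Some (i,q)) = 0.
Proof.
move=> hq; apply/eqP; rewrite cards_eq0; apply/eqP/setP => y; rewrite !inE.
apply/negP => /andP [yR h].
have : P' i <= q by lia.
move=> hq'; case: (nbr_cases hq' (subsetP sR _ yR) h) => [[_ hh1]|[q' [_ hh2 hh3]]|[q0 _]]; lia.
Qed.

Lemma nb_sec i (q : 'I_N.+1) : P' i + 1 = q -> nb adjM R (Some (i,q)) <= 1.
Proof.
move=> hq; have hq' : P' i <= q by lia.
apply/card_le1_eqP => y z; rewrite !inE => /andP [yR hy] /andP [zR hz].
case: (nbr_cases hq' (subsetP sR _ yR) hy) => [[-> hh4]|[q1 [-> hh5 hh6]]|[hh7 _]];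
case: (nbr_cases hq' (subsetP sR _ zR) hz) => [[-> hh8]|[q2 [-> hh9 hh10]]|[hh11 _]] => //;
  try (exfalso; lia).
by do 2 f_equal; apply: ord_inj; lia.
Qed.

Lemma nb_le2 i (q : 'I_N.+1) : 1 <= q -> P' i <= q -> nb adjM R (Some (i,q)) <= 2.
Proof.
move=> hq1 hq'.
apply: (card_le2 (p := fun y : V => if y is Some (_, q') then q'.+1 == q else false)) => y z;
  rewrite !inE => /andP [yR hy] /andP [zR hz];
case: (nbr_cases hq' (subsetP sR _ yR) hy) => [[-> hh12]|[q1 [-> hh13 hh14]]|[hh15 _]];
case: (nbr_cases hq' (subsetP sR _ zR) hz) => [[-> hh16]|[q2 [-> hh17 hh18]]|[hh19 _]] => //= hh1 hh2;
  try (exfalso; lia); try (do 2 f_equal; apply: ord_inj; lia).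
Qed.

Lemma nb_e i (q : 'I_N.+1) : P' i <= q -> (q : nat) = 0 ->
  nb adjM R (Some (i,q)) <= 1 + #|R :&: E|.
Proof.
move=> hq' q0.
apply: leq_trans (_ : #|None |: (R :&: E)| <= _); last first.
  by rewrite cardsU1; case: (None \notin _).
apply: subset_leq_card; apply/subsetP => y; rewrite !inE => /andP [yR hy].
case: (nbr_cases hq' (subsetP sR _ yR) hy) => [[-> hh20]|[q1 [-> hh21 hh22]]|[_ [j [q2 [yE hh23 _]]]]].
- by rewrite eqxx.
- exfalso; lia.
- by move: yR; rewrite yE => ->; rewrite /= hh23 eqxx ?orbT.
Qed.

Hypothesis nR : None \notin R.

Lemma nb_e' i (q : 'I_N.+1) : P' i <= q -> (q : nat) = 0 ->
  nb adjM R (Some (i,q)) <= #|R :&: E|.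
Proof.
move=> hq' q0; apply: subset_leq_card; apply/subsetP => y; rewrite !inE => /andP [yR hy].
case: (nbr_cases hq' (subsetP sR _ yR) hy) => [[yN hh24]|[q1 [-> hh25 hh26]]|[_ [j [q2 [yE hh27 _]]]]].
- by move: yR; rewrite yN (negbTE nR).
- exfalso; lia.
- by move: yR; rewrite yE => ->; rewrite /= hh27 eqxx.
Qed.

Lemma nb_v' i (q : 'I_N.+1) : P' i <= q -> (q : nat) = 1 ->
  nb adjM R (Some (i,q)) <= (0 < P' i).
Proof.
move=> hq' q1; case: (posnP (P' i)) => [P0|Ppos].
  rewrite leqn0 /nb cards_eq0; apply/eqP/setP => y; rewrite !inE.
  apply/negP => /andP [yR hy].
  case: (nbr_cases hq' (subsetP sR _ yR) hy) => [[yN hh28]|[q' [_ hh29 hh30]]|[hh31 _]].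
  - by move: yR; rewrite yN (negbTE nR).
  - lia.
  - lia.
apply/card_le1_eqP => y z; rewrite !inE => /andP [yR hy] /andP [zR hz].
case: (nbr_cases hq' (subsetP sR _ yR) hy) => [[yN hh32]|[q3 [-> hh33 hh34]]|[hh35 _]];
  try (by move: yR; rewrite yN (negbTE nR)); try (exfalso; lia);
case: (nbr_cases hq' (subsetP sR _ zR) hz) => [[zN hh36]|[q4 [-> hh37 hh38]]|[hh39 _]];
  try (by move: zR; rewrite zN (negbTE nR)); try (exfalso; lia).
by do 2 f_equal; apply: ord_inj; lia.
Qed.

End Bounds.

Lemma E_split (S R : {set V}) : (forall x, x \in S -> x \notin R) ->
  #|S :&: E| + #|R :&: E| <= m.
Proof.
move=> SR.
have h0 : (S :&: E) :&: (R :&: E) = set0.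
  apply/setP => x; rewrite !inE; apply/negP => /andP [/andP [xS _] /andP [xR _]].
  by move: (SR x xS); rewrite xR.
have := cardsU (S :&: E) (R :&: E); rewrite h0 cards0 subn0 => <-.
apply: leq_trans cardE_le; apply: subset_leq_card; apply/subsetP => x.
by rewrite !inE => /orP [] /andP [].
Qed.

Lemma goodXP k : 3 <= k -> m < k ->
  forall P, (forall i, P i <= N.+1) -> good adjM k (XP P).
Proof.
move=> k3 mk.
suff H : forall s P, \sum_i P i <= s -> (forall i, P i <= N.+1) -> good adjM k (XP P).
  by move=> P hP; apply: (H _ P (leqnn _) hP).
elim=> [|s IH] P hs hP.
  by apply: gsmall; rewrite card_XP //; lia.
case: (leqP #|XP P| k) => [small|big]; first exact: gsmall.
have kS : k <= \sum_i P i by move: big; rewrite card_XP //; lia.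
case: (pickP (fun i => 2 < P i)) => [b Pb | H].
-
  pose d := minn (P b) k.
  have d3 : 3 <= d by rewrite leq_min Pb k3.
  have dP : d <= P b by apply: geq_minl.
  have dk : d <= k by apply: geq_minr.
  pose P1 := fun j => if j == b then P b - d else P j.
  have sP1 : \sum_i P1 i + d = \sum_i P i.
    rewrite (bigD1 b) //= [in RHS](bigD1 b) //= /P1 eqxx.
    rewrite (eq_bigr P); last by move=> j /negbTE ->.
    by rewrite addnAC subnK.
  have [P' [hP' sP']] : exists P' : 'I_m -> nat,
      (forall i, P' i <= P1 i) /\ \sum_i P' i + (k - d) = \sum_i P1 i.
    by apply: exists_sub; lia.
  have P'P i : P' i <= P i.
    apply: leq_trans (hP' i) _; rewrite /P1; case: (eqVneq i b) => [->|_] //; exact: leq_subr.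
  have P'b : P' b + d <= P b by have := hP' b; rewrite /P1 eqxx; lia.
  have sum' : \sum_i P' i + k = \sum_i P i by lia.
  have hP'N i : P' i <= N.+1 := leq_trans (P'P i) (hP i).
  have sub : XP P' \subset XP P.
    apply/subsetP => -[[i q]|]; rewrite !inE //= => h; exact: leq_trans h (P'P i).
  have cardeq : #|XP P| = #|XP P'| + k by rewrite !card_XP //; lia.
  have gR : good adjM k (XP P') by apply: IH => //; lia.
  apply: (gstep sub cardeq _ gR) => t tpos.
  set S := XP P :\: XP P'.
  have cS : #|S| = k by rewrite cardsD (setIidPr sub) !card_XP //; lia.
  have memS x : x \in S -> exists i (q : 'I_N.+1), [/\ x = Some (i,q), P' i <= q & q < P i].
    case: x => [[i q]|]; rewrite !inE //= => /andP [h1 h2].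
    by exists i, q; split => //; rewrite leqNgt.
  have SR x : x \in S -> x \notin XP P' by rewrite inE => /andP [].
  have bN : P' b + 2 < N.+1 by have := hP b; lia.
  pose sec : V := Some (b, inord (P' b + 1)).
  pose lst : V := Some (b, inord (P' b + 2)).
  have secS : sec \in S by rewrite !inE /= inordK; lia.
  have lstS : lst \in S by rewrite !inE /= inordK; lia.
  have nb_lst : nb adjM (XP P') lst = 0. rewrite /lst. apply: (@nb_far P' (XP P') (subxx _) b (inord (P' b + 2))). rewrite inordK; lia.
  have nb_sec' : nb adjM (XP P') sec <= 1.
    apply: (@nb_sec P' (XP P') (subxx _) b (inord (P' b + 1))); rewrite inordK; lia.
  have secl : sec != lst.
    apply/eqP => e; have := congr1 (fun x : V => if x is Some p then (p.2 : nat) else 0) e.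
    by rewrite /= !inordK; lia.
  clearbody S sec lst.
  case: t tpos => [//|[|[|t']]] _.
  + apply: leq_trans (subset_leq_card (_ : _ \subset S :\ lst)) _.
      apply/subsetP => x; rewrite inE => /andP [xS h]; rewrite !inE xS andbT.
      by apply/eqP => e; rewrite e nb_lst in h.
    by move: cS; rewrite (cardsD1 lst S) lstS add1n => <-; rewrite subn1.
  + apply: leq_trans (subset_leq_card (_ : _ \subset S :\: [set sec; lst])) _.
      apply/subsetP => x; rewrite inE => /andP [xS h]; rewrite inE xS andbT !inE.
      apply/negP => /orP [] /eqP e; move: h; rewrite e.
        by move=> h2; have := leq_trans h2 nb_sec'.
      by rewrite nb_lst.
    have e2 : S :&: [set sec; lst] = [set sec; lst].
      by apply/setIidPr; apply/subsetP => x; rewrite !inE => /orP [] /eqP ->.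
    by rewrite cardsD e2 cards2 secl cS.
  + set A := [set x in S | t'.+3 <= nb adjM (XP P') x].
    case: (set_0Vmem A) => [->|[x xA]]; first by rewrite cards0.
    have q0 y : y \in A -> exists i (q : 'I_N.+1), [/\ y = Some (i,q), P' i <= q & (q : nat) = 0].
      rewrite inE => /andP [yS h]; have [i [q [yE h1 h2]]] := memS y yS.
      exists i, q; split => //; case: (ltnP 0 q) => [qpos|]; last by rewrite leqn0 => /eqP.
      move: h; rewrite yE => h; have := nb_le2 (subxx (XP P')) qpos h1.
      by move=> h3; have := leq_trans h h3.
    have [i [q [xE h1 h2]]] := q0 x xA.
    have hx : t'.+3 <= 1 + #|XP P' :&: E|.
      apply: leq_trans (nb_e (subxx (XP P')) h1 h2).
      by move: xA; rewrite inE xE => /andP [].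
    have hA : A \subset S :&: E.
      apply/subsetP => y yA; have [j [q' [yE _ q'0]]] := q0 y yA.
      move: yA; rewrite !inE => /andP [-> _]; by rewrite yE /= q'0.
    have := E_split SR; have := subset_leq_card hA; lia.
-
  have H2 i : P i <= 2 by move: (H i) => /negbT; rewrite -leqNgt.
  have [b Pb] : exists b, P b = 2.
    case: (pickP (fun i => P i == 2)) => [b /eqP Pb|H']; first by exists b.
    have : \sum_i P i <= \sum_(i < m) 1.
      by apply: leq_sum => i _; have := H2 i; have := H' i; rewrite /=; lia.
    rewrite sum_nat_const card_ord; lia.
  have sum2 : \sum_i P i <= \sum_(i < m) 2 by apply: leq_sum => i _; exact: H2.
  rewrite sum_nat_const card_ord in sum2.
  pose P1 := fun j => if j == b then 0 else P j.
  have sP1 : \sum_i P1 i + 2 = \sum_i P i.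
    rewrite (bigD1 b) //= [in RHS](bigD1 b) //= /P1 eqxx.
    rewrite (eq_bigr P); last by move=> j /negbTE ->.
    by rewrite Pb add0n addnC.
  have [P' [hP' sP']] : exists P' : 'I_m -> nat,
      (forall i, P' i <= P1 i) /\ \sum_i P' i + (k - 3) = \sum_i P1 i.
    by apply: exists_sub; lia.
  have P'P i : P' i <= P i.
    apply: leq_trans (hP' i) _; rewrite /P1; case: (i == b) => //.
  have P'b : P' b = 0 by have := hP' b; rewrite /P1 eqxx; lia.
  have sum' : \sum_i P' i + k.-1 = \sum_i P i by lia.
  have hP'N i : P' i <= N.+1 := leq_trans (P'P i) (hP i).
  pose R := XP P' :\ None.
  have RX : R \subset XP P'.
    by apply/subsetP => x; rewrite inE => /andP [].
  have nR : None \notin R by rewrite !inE.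
  have sub : R \subset XP P.
    apply/subsetP => -[[i q]|]; rewrite !inE //= => h; exact: leq_trans h (P'P i).
  have cR : #|R| = \sum_i P' i.
    by have := cardsD1 None (XP P'); rewrite card_XP // inE add1n => -[].
  have cardeq : #|XP P| = #|R| + k by rewrite card_XP // cR; lia.
  have gR : good adjM k R by apply: gsmall; rewrite cR; lia.
  apply: (gstep sub cardeq _ gR) => t tpos.
  set S := XP P :\: R.
  have cS : #|S| = k by rewrite cardsD (setIidPr sub) card_XP // cR; lia.
  have memS x : x \in S ->
      x = None \/ exists i (q : 'I_N.+1), [/\ x = Some (i,q), P' i <= q & q < P i].
    case: x => [[i q]|] xS; [right | by left].
    move: xS; rewrite /S /R !inE /= => /andP [h1 h2]; exists i, q; split => //.
    by rewrite leqNgt.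
  have SR x : x \in S -> x \notin R by rewrite inE => /andP [].
  have N1 : 1 < N.+1 by have := hP b; lia.
  pose vb : V := Some (b, inord 1).
  have vbS : vb \in S by rewrite !inE /= inordK // P'b Pb.
  have nb_vb : nb adjM R vb = 0.
    apply/eqP; rewrite -leqn0; apply: leq_trans (nb_v' RX nR _ _) _; rewrite ?inordK ?P'b //.
  have nb1 i (q : 'I_N.+1) : P' i <= q -> q < P i -> 0 < q -> nb adjM R (Some (i,q)) <= 1.
    move=> h1 h2 h3; have q1 : (q : nat) = 1 by have := H2 i; lia.
    by apply: leq_trans (nb_v' RX nR h1 q1) _; case: (0 < P' i).
  have nbN : nb adjM R None <= #|R|.
    by apply: subset_leq_card; apply/subsetP => y; rewrite inE => /andP [].
  clearbody S vb R.
  case: t tpos => [//|[|t']] _.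
  + apply: leq_trans (subset_leq_card (_ : _ \subset S :\ vb)) _.
      apply/subsetP => x; rewrite inE => /andP [xS h]; rewrite !inE xS andbT.
      by apply/eqP => e; rewrite e nb_vb in h.
    by move: cS; rewrite (cardsD1 vb S) vbS add1n => <-; rewrite subn1.
  + set A := [set x in S | t'.+2 <= nb adjM R x].
    have cl y : y \in A -> y = None \/ y \in S :&: E.
      rewrite inE => /andP [yS h]; case: (memS y yS) => [->|[i [q [yE h1 h2]]]]; first by left.
      right; rewrite inE yS yE inE /=; case: (ltnP 0 q) => [qpos|]; last by rewrite leqn0.
      by move: h; rewrite yE => h; have := leq_trans h (nb1 i q h1 h2 qpos).
    case: (set_0Vmem (A :&: E)) => [AE0|[x xAE]].
      have hA : A \subset [set None].
        apply/subsetP => y yA; case: (cl y yA) => [->|]; first by rewrite inE.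
        rewrite inE => /andP [_ yE].
        have : y \in A :&: E by rewrite inE yA yE.
        by rewrite AE0 inE.
      case: (boolP (None \in A)) => NA.
        have : t'.+2 <= nb adjM R None by move: NA; rewrite inE => /andP [].
        have := subset_leq_card hA; rewrite cards1; lia.
      have A0 : A = set0.
        apply/setP => y; rewrite [in RHS]inE.
        apply/negP => yA; have := subsetP hA y yA; rewrite inE => /eqP yN.
        by move: NA; rewrite -yN yA.
      by rewrite A0 cards0.
    move: xAE; rewrite inE => /andP [xA xE].
    have xS : x \in S by move: xA; rewrite inE => /andP [].
    case: (memS x xS) => [xN|[i [q [xq h1 h2]]]]; first by move: xE; rewrite xN inE.
    have q0 : (q : nat) = 0 by move: xE; rewrite xq inE /= => /eqP.
    have hx : t'.+2 <= #|R :&: E|.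
      apply: leq_trans (nb_e' RX nR h1 q0).
      by move: xA; rewrite inE xq => /andP [].
    have hA : A \subset None |: (S :&: E).
      apply/subsetP => y yA; case: (cl y yA) => [->|yS]; [by rewrite setU11 | by rewrite setU1r].
    have := subset_leq_card hA; rewrite cardsU1.
    have := E_split SR; case: (None \notin S :&: E); lia.
Qed.

End Model.


Section Phi.
Variables (m : nat) (l : 'I_m -> nat).
Local Notation T := (star_sub_vertex l).
Local Notation e := (@star_sub_adj m l).
Definition NN := \sum_(i < m) 2 * l i.
Local Notation W' := (option ('I_m * 'I_NN.+1)%type).
Local Notation TV := (total_vertex e).

Definition code (x : T) : option ('I_m * nat) :=
  if x is Some y then Some (tag y, val (tagged y)) else None.

Lemma code_inj : injective code.
Proof.
move=> [[i1 j1]|] [[i2 j2]|] //= [e1 e2].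
subst i2; congr Some; congr existT; exact: val_inj.
Qed.

Lemma code_None x : code x = None -> x = None.
Proof. by case: x. Qed.

Lemma code_bnd x i j : code x = Some (i, j) -> j < l i.
Proof. by case: x => [[i' j']|] //= [<- <-]. Qed.

Definition depth (x : T) : nat := if code x is Some p then p.2.+1 else 0.
Definition cp (i : 'I_m) (j : nat) : option ('I_m * nat) :=
  if j is j'.+1 then Some (i, j') else None.
Local Notation par_child x y i j :=
  ([/\ j < l i, code x = cp i j & code y = Some (i, j)]).

Lemma adj_orient x y : e x y -> exists i j, par_child x y i j \/ par_child y x i j.
Proof.
case: x => [[i1 j1]|]; case: y => [[i2 j2]|] //=.
- move=> /andP [/eqP e1]; subst i2 => /orP [] /eqP e2.
  + by exists i1, j2; left; split => //=; rewrite -e2.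
  + by exists i1, j1; right; split => //=; rewrite -e2.
- move=> /eqP h; exists i1, j1; right; split => //=; by rewrite h.
- move=> /eqP h; exists i2, j2; left; split => //=; by rewrite h.
Qed.

Lemma edge_orient (f : edge_t e) : exists x y i j, par_child x y i j /\ val f = [set x; y].
Proof.
case: f => A /= /existsP [x /existsP [y /andP [exy /eqP AE]]].
case: (adj_orient exy) => i [j [h|h]].
  by exists x, y, i, j.
by exists y, x, i, j; rewrite AE setUC.
Qed.

Lemma pc_neq x y i j : par_child x y i j -> x != y.
Proof.
case=> _ cx cy; apply/eqP => exy; move: cx; rewrite exy cy.
case: j {cy} => [|j] //= h.
by have := congr1 (fun o : option ('I_m * nat) => if o is Some p then p.2 else 0) h => /=; lia.
Qed.

Lemma pc_depth x y i j : par_child x y i j -> depth x = j /\ depth y = j.+1.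
Proof. by case=> _; rewrite /depth => -> ->; case: j. Qed.

Lemma pc_arm x y i j z : par_child x y i j -> z \in [set x; y] -> z != None ->
  exists j', code z = Some (i, j').
Proof.
case=> _ cx cy /set2P [->|->] zN; last by exists j.
move: cx; case: j cy => [|j] cy /= cx; last by exists j.
by move: zN; rewrite (code_None cx).
Qed.

Lemma code_Some x i j : code x = Some (i, j) -> x != None.
Proof. by case: x. Qed.

Definition phi (a : TV) : W' :=
  match a with
  | inl x => if code x is Some p then Some (p.1, inord (2 * p.2).+1) else None
  | inr f => if [pick z in val f | z != None] is Some z then
               (if code z is Some p then Some (p.1, inord (\sum_(w in val f) depth w).-1)
                else None)
             else None
  end.

Lemma phi_edge (f : edge_t e) x y i j : par_child x y i j -> val f = [set x; y] ->
  phi (inr f) = Some (i, inord (2 * j)).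
Proof.
move=> pc fE; rewrite /phi.
have hs : \sum_(w in val f) depth w = (2 * j).+1.
  rewrite fE big_setU1 /= ?big_set1; last by rewrite inE (pc_neq pc).
  have [dx dy] := pc_depth pc; rewrite dx dy; lia.
case: pickP => [z /andP [zA zN]|H].
  have zA' : z \in [set x; y] by rewrite -fE.
  have [j' cz] := pc_arm pc zA' zN.
  by rewrite cz hs.
have := H y; rewrite fE !inE eqxx orbT /=.
by case: pc => _ _ /code_Some ->.
Qed.

Lemma bnd i j : j < l i -> (2 * j).+1 < NN.+1.
Proof.
move=> h; have : 2 * l i <= NN by rewrite /NN (bigD1 i) //= leq_addr.
lia.
Qed.

Lemma phi_inl x i j : code x = Some (i, j) -> phi (inl x) = Some (i, inord (2 * j).+1).
Proof. by rewrite /phi => ->. Qed.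

Lemma phi_inlN x : code x = None -> phi (inl x) = None.
Proof. by rewrite /phi => ->. Qed.

Lemma adjM_same (i : 'I_m) (a b : nat) : a < NN.+1 -> b < NN.+1 ->
  [|| b == a.+1, b == a.+2, a == b.+1 | a == b.+2] ->
  adjM (Some (i, (inord a : 'I_NN.+1))) (Some (i, inord b)).
Proof. by move=> ha hb; rewrite /= eqxx !inordK. Qed.

Lemma adjM_sym (x y : W') : adjM x y = adjM y x.
Proof.
case: x => [[i q]|]; case: y => [[i' q']|] //=.
rewrite eq_sym; case: (i' == i) => /=.
  by case: (q' == q.+1 :> nat); case: (q' == q.+2 :> nat); case: (q == q'.+1 :> nat);
     case: (q == q'.+2 :> nat).
by rewrite andbC.
Qed.

Lemma pc_adj_vv x y i j : par_child x y i j -> adjM (phi (inl x)) (phi (inl y)).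
Proof.
case=> hj cx cy; rewrite (phi_inl cy).
have := bnd hj.
move: cx; case: j hj cy => [|j] hj cy cx b.
  by rewrite (phi_inlN cx) /= inordK //; lia.
rewrite (phi_inl cx); apply: adjM_same; lia.
Qed.

Lemma pc_adj_ve (f : edge_t e) x y i j u : par_child x y i j -> val f = [set x; y] ->
  u \in [set x; y] -> adjM (phi (inl u)) (phi (inr f)).
Proof.
move=> pc fE /set2P [->|->]; rewrite (phi_edge pc fE); case: pc => hj cx cy;
  have := bnd hj.
  move: cx; case: j hj cy => [|j] hj cy cx b.
    by rewrite (phi_inlN cx) /= inordK //; lia.
  rewrite (phi_inl cx); apply: adjM_same; lia.
by move=> b; rewrite (phi_inl cy); apply: adjM_same; lia.
Qed.

Lemma edge_eq (f g : edge_t e) x1 y1 x2 y2 i j :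
  par_child x1 y1 i j -> val f = [set x1; y1] ->
  par_child x2 y2 i j -> val g = [set x2; y2] -> f = g.
Proof.
case=> _ cx1 cy1 fE [_ cx2 cy2] gE; apply: val_inj; rewrite fE gE.
by rewrite (code_inj (etrans cx1 (esym cx2))) (code_inj (etrans cy1 (esym cy2))).
Qed.

Lemma phi_adj (a b : TV) : total_adj a b -> adjM (phi a) (phi b).
Proof.
case: a => [u|f]; case: b => [v|g] => h.
- have {}h : e u v := h.
  move/adj_orient: h => [i [j [pc|pc]]]; first exact: pc_adj_vv pc.
  by rewrite adjM_sym; exact: pc_adj_vv pc.
- have uin : u \in val g := h.
  have [x [y [i [j [pc fE]]]]] := edge_orient g.
  by move: uin; rewrite fE => uin; exact: pc_adj_ve pc fE uin.
- have uin : v \in val f := h.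
  have [x [y [i [j [pc fE]]]]] := edge_orient f.
  by move: uin; rewrite fE adjM_sym => uin; exact: pc_adj_ve pc fE uin.
have {}h : (f != g) && ~~ [disjoint val f & val g] := h.
move: h.
move=> /andP [fg]; rewrite -setI_eq0 => /set0Pn [w]; rewrite inE => /andP [wf wg].
have [x1 [y1 [i1 [j1 [pc1 fE]]]]] := edge_orient f.
have [x2 [y2 [i2 [j2 [pc2 gE]]]]] := edge_orient g.
rewrite (phi_edge pc1 fE) (phi_edge pc2 gE).
have b1 : (2 * j1).+1 < NN.+1 by case: pc1 => h1 _ _; exact: bnd h1.
have b2 : (2 * j2).+1 < NN.+1 by case: pc2 => h1 _ _; exact: bnd h1.
have b1' : 2 * j1 < NN.+1 by lia.
have b2' : 2 * j2 < NN.+1 by lia.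
move: wf wg; rewrite fE gE => /set2P [] -> /set2P [] e12.
- (* x1 = x2 *)
  case: pc1 => h1 cx1 cy1; case: pc2 => h2 cx2 cy2.
  have := cx1; rewrite e12 cx2.
  case: j1 h1 cx1 cy1 b1 b1' => [|j1] h1 cx1 cy1 b1 b1'; case: j2 h2 cx2 cy2 b2 b2' => [|j2] h2 cx2 cy2 b2 b2' //= .
  + move=> _; case: (eqVneq i1 i2) => [ei|ne].
      subst i2; exfalso; move/negP: fg; apply.
      by apply/eqP; apply: (@edge_eq f g x1 y1 x2 y2 i1 0).
    by rewrite !inordK.
  + move=> [ei ej]; subst i2 j2; exfalso; move/negP: fg; apply.
    by apply/eqP; apply: (@edge_eq f g x1 y1 x2 y2 i1 j1.+1).
- (* x1 = y2 *)
  case: pc1 => h1 cx1 cy1; case: pc2 => h2 cx2 cy2.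
  have := cx1; rewrite e12 cy2.
  case: j1 h1 cx1 cy1 b1 b1' => [|j1] h1 cx1 cy1 b1 b1' //= [ei ej]; subst i2 j2.
  apply: adjM_same => //; lia.
- (* y1 = x2 *)
  case: pc1 => h1 cx1 cy1; case: pc2 => h2 cx2 cy2.
  have := cy1; rewrite e12 cx2.
  case: j2 h2 cx2 cy2 b2 b2' => [|j2] h2 cx2 cy2 b2 b2' //= [ei ej]; subst i2 j1.
  apply: adjM_same => //; lia.
- (* y1 = y2 *)
  case: pc1 => h1 cx1 cy1; case: pc2 => h2 cx2 cy2.
  have := cy1; rewrite e12 cy2 => -[ei ej]; subst i2 j2.
  exfalso; move/negP: fg; apply; apply/eqP.
  by apply: (@edge_eq f g x1 y1 x2 y2 i1 j1).
Qed.

Lemma phi_edge_ex (f : edge_t e) : exists i j, j < l i /\ phi (inr f) = Some (i, inord (2 * j)).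
Proof.
have [x [y [i [j [pc fE]]]]] := edge_orient f.
exists i, j; split; first by case: pc.
exact: phi_edge pc fE.
Qed.

Lemma phi_inj : injective phi.
Proof.
have inl_form x : (code x = None /\ phi (inl x) = None) \/
    exists i j, [/\ code x = Some (i,j), j < l i & phi (inl x) = Some (i, inord (2 * j).+1)].
  case cx: (code x) => [[i j]|]; last by left; split => //; exact: phi_inlN.
  by right; exists i, j; split => //; [exact: code_bnd cx | exact: phi_inl cx].
move=> [x|f] [y|g].
- case: (inl_form x) => [[cx ->]|[i1 [j1 [cx b1 ->]]]];
  case: (inl_form y) => [[cy ->]|[i2 [j2 [cy b2 ->]]]] //.
    by rewrite (code_None cx) (code_None cy).
  have h1 := bnd b1; have h2 := bnd b2.
  move=> [ei /(congr1 val)]; rewrite /= !inordK // => ej.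
  have jj : j1 = j2 by lia.
  subst i2 j2; congr inl; apply: code_inj; by rewrite cx cy.
- have [i [j [hj ->]]] := phi_edge_ex g.
  case: (inl_form x) => [[cx ->]|[i1 [j1 [cx b1 ->]]]] //.
  have h1 := bnd b1; have h2 := bnd hj.
  move=> [ei /(congr1 val)]; rewrite /= !inordK //; lia.
- have [i [j [hj ->]]] := phi_edge_ex f.
  case: (inl_form y) => [[cy ->]|[i1 [j1 [cy b1 ->]]]] //.
  have h1 := bnd b1; have h2 := bnd hj.
  move=> [ei /(congr1 val)]; rewrite /= !inordK //; lia.
have [x1 [y1 [i1 [j1 [pc1 fE]]]]] := edge_orient f.
have [x2 [y2 [i2 [j2 [pc2 gE]]]]] := edge_orient g.
rewrite (phi_edge pc1 fE) (phi_edge pc2 gE).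
have b1 : (2 * j1).+1 < NN.+1 by case: pc1 => h1 _ _; exact: bnd h1.
have b2 : (2 * j2).+1 < NN.+1 by case: pc2 => h1 _ _; exact: bnd h1.
move=> [ei /(congr1 val)]; rewrite /= !inordK; try lia.
move=> ej; have jj : j1 = j2 by lia.
subst i2 j2; congr inr; exact: edge_eq pc1 fE pc2 gE.
Qed.

Lemma pc_e x y i j : par_child x y i j -> e x y.
Proof.
move=> [hj cx cy]; case: y cy => [[i2 j2]|] //= [e1 e2]; subst i2.
case: x cx => [[i1 j1]|] /=.
  case: j hj e2 => [|j] hj e2 //= [e3 e4]; subst i1.
  by rewrite /= eqxx /= e4 e2 eqxx.
case: j hj e2 => [|j] hj e2 //= _.
by rewrite e2.
Qed.

Lemma phi_img : [set phi a | a in [set: TV]] = XP NN (fun i => 2 * l i).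
Proof.
apply/setP => v; rewrite inE; apply/imsetP/idP.
- move=> [a _ ->]; case: a => [x|f].
    case cx: (code x) => [[i j]|]; last by rewrite (phi_inlN cx).
    have hj := code_bnd cx.
    by rewrite (phi_inl cx) /= inordK; [lia | exact: bnd hj].
  have [i [j [hj ->]]] := phi_edge_ex f.
  have b := bnd hj; rewrite /= inordK; lia.
case: v => [[i q]|] /= hq; last by exists (inl None); [exact: in_setT | rewrite /phi].
have qh := odd_double_half q; rewrite -mul2n in qh.
move: qh; case oq: (odd q) => qh.
- have hj : q./2 < l i by lia.
  pose y : T := Some (Tagged (fun i => 'I_(l i)) (Ordinal hj)).
  exists (inl y); first exact: in_setT.
  rewrite /y /phi /=; congr Some; congr pair.
  apply: ord_inj; rewrite inordK; last exact: bnd hj.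
  by rewrite -[in LHS]qh add1n.
- have hj : q./2 < l i by lia.
  set j := q./2 in hj qh *.
  pose y : T := Some (Tagged (fun i => 'I_(l i)) (Ordinal hj)).
  have cy : code y = Some (i, j) by [].
  have [x cx] : exists x : T, code x = cp i j.
    clearbody j; case: j hj {qh y cy} => [|j'] hj; first by exists None.
    by exists (Some (Tagged (fun i => 'I_(l i)) (Ordinal (ltnW hj)))).
  have pc : par_child x y i j by split.
  have hA : is_edge e [set x; y].
    by apply/existsP; exists x; apply/existsP; exists y; rewrite (pc_e pc) eqxx.
  exists (inr (exist _ [set x; y] hA)); first exact: in_setT.
  rewrite (phi_edge (f := exist _ [set x; y] hA) pc) //; congr Some; congr pair.
  apply: ord_inj; rewrite inordK; last by have := bnd hj; lia.
  by rewrite -[in LHS]qh.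
Qed.

End Phi.

Unset Implicit Arguments.

Theorem theorem1p5 (m : nat) (l : 'I_m -> nat) :
  (forall i, 0 < l i) ->
  (m = 1 -> forall k, 3 <= k ->
     equitably_k_choosable (@total_adj (star_sub_vertex l) (@star_sub_adj m l)) k) /\
  (2 <= m -> forall k, m.+1 <= k ->
     equitably_k_choosable (@total_adj (star_sub_vertex l) (@star_sub_adj m l)) k).
Proof.
have main k : 3 <= k -> m < k ->
    equitably_k_choosable (@total_adj (star_sub_vertex l) (@star_sub_adj m l)) k.
  move=> k3 mk; apply: (@transfer _ _ _ _ k (@phi m l)).
  - lia.
  - exact: adjM_irr.
  - exact: phi_inj.
  - exact: phi_adj.
  rewrite phi_img; apply: goodXP => // i.
  by have := bnd (j := 0) (i := i); rewrite /NN (bigD1 i) //=; lia.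
move=> _; split => [m1 k k3|m2 k mk]; apply: main; lia.
Qed.
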